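(* Let $M=(W,\bm{\Box},V)$ be a transitive neighborhood model and $\Sigma$ a set of formulas closed under subformulas. Then the transitive filtration $M^{T}_f=(W_f,\bm{\Box}^{T}_f,V_f)$ of $M$ through $\Sigma$ is a filtration of $M$ through $\Sigma$, i.e. $\bm{\Box}^{T}_f\widetilde{|\varphi|}_M=\widetilde{|\Box\varphi|}_M$ for every formula $\Box\varphi\in\Sigma$.
   Context: A neighborhood model is $M=(W,\bm{\Box},V)$ with $W\neq\varnothing$, $\bm{\Box}:\mathcal P(W)\to\mathcal P(W)$, $V:Var\to\mathcal P(W)$; truth sets: $|p|_M=V(p)$, $|\neg\varphi|_M=W\setminus|\varphi|_M$, $|\varphi\wedge\psi|_M=|\varphi|_M\cap|\psi|_M$, $|\Box\varphi|_M=\bm{\Box}|\varphi|_M$. $M$ is transitive if $\bm{\Box}X\subseteq\bm{\Box}\bm{\Box}X$ for all $X\subseteq W$. For $\Sigma$ closed under subformulas, $w\sim v$ iff $w,v$ satisfy the same formulas of $\Sigma$; $\widetilde w$ is the class of $w$, $W_f=\{\widetilde w:w\in W\}$, $\widetilde X=\{\widetilde w:w\in X\}$, $V_f(p)=\widetilde{|p|}_M$. A filtration of $M$ through $\Sigma$ is a model $(W_f,\bm{\Box}_f,V_f)$ with $\bm{\Box}_f\widetilde{|\varphi|}_M=\widetilde{|\Box\varphi|}_M$ whenever $\Box\varphi\in\Sigma$. The minimal filtration has $\bm{\Box}^{-}_fX=\widetilde{|\Box\varphi|}_M$ if $X=\widetilde{|\varphi|}_M$ for some formula $\Box\varphi\in\Sigma$,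 and $\bm{\Box}^{-}_fX=\varnothing$ otherwise. For any function $\bm{\Box}':\mathcal P(U)\to\mathcal P(U)$, its closure $\widehat{\bm{\Box}'}$ is given by $\widehat{\bm{\Box}'}X=X$ if $X=\bm{\Box}'Y$ for some $Y\subseteq U$, and $\varnothing$ otherwise. The transitive filtration is $M^{T}_f=(W_f,\bm{\Box}^{T}_f,V_f)$ with $\bm{\Box}^{T}_fX=\bm{\Box}^{-}_fX\cup\widehat{\bm{\Box}^{-}_f}X$. *)

(* Defs.v *)
From Stdlib Require Import Classical ClassicalEpsilon.
Unset Implicit Arguments.

Inductive form (Var : Type) : Type :=
| FVar : Var -> form Var
| FNeg : form Var -> form Var
| FAnd : form Var -> form Var -> form Var
| FBox : form Var -> form Var.
Arguments FVar {Var}. Arguments FNeg {Var}. Arguments FAnd {Var}. Arguments FBox {Var}.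

Definition subset {T : Type} (A B : T -> Prop) : Prop := forall x, A x -> B x.

(* Neighborhood model (W, Box, V); nonemptiness of W is a separate hypothesis. *)
Record nmodel (Var : Type) := NModel {
  world : Type;
  nbox : (world -> Prop) -> (world -> Prop);
  nval : Var -> world -> Prop }.
Arguments world {Var}. Arguments nbox {Var}. Arguments nval {Var}.

Section Model.
Variables (Var : Type) (M : nmodel Var).
Local Notation W := (world M).

Fixpoint truth (phi : form Var) : W -> Prop :=
  match phi with
  | FVar p => nval M p
  | FNeg a => fun w => ~ truth a w
  | FAnd a b => fun w => truth a w /\ truth b w
  | FBox a => nbox M (truth a)
  end.

Definition transitive_model : Prop :=
  forall X : W -> Prop, subset (nbox M X) (nbox M (nbox M X)).

Definition subformula_closed (Sigma : form Var -> Prop) : Prop :=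
  (forall a, Sigma (FNeg a) -> Sigma a) /\
  (forall a b, Sigma (FAnd a b) -> Sigma a /\ Sigma b) /\
  (forall a, Sigma (FBox a) -> Sigma a).

Variable Sigma : form Var -> Prop.

Definition sim (w v : W) : Prop :=
  forall phi, Sigma phi -> (truth phi w <-> truth phi v).

Definition cls (w : W) : W -> Prop := fun v => sim w v.

Definition Wf : Type := { C : W -> Prop | exists w, C = cls w }.

Definition tilde (X : W -> Prop) : Wf -> Prop :=
  fun c => exists w, X w /\ proj1_sig c = cls w.

Definition Vf (p : Var) : Wf -> Prop := tilde (nval M p).

Definition box_min (X : Wf -> Prop) : Wf -> Prop :=
  match excluded_middle_informative
          (exists phi, Sigma (FBox phi) /\ X = tilde (truth phi)) with
  | left H => tilde (truth (FBox (proj1_sig (constructive_indefinite_description _ H))))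
  | right _ => fun _ => False
  end.

Definition is_filtration (boxf : (Wf -> Prop) -> (Wf -> Prop)) : Prop :=
  forall phi, Sigma (FBox phi) -> boxf (tilde (truth phi)) = tilde (truth (FBox phi)).

End Model.

Definition closure_box {U : Type} (B' : (U -> Prop) -> (U -> Prop)) (X : U -> Prop)
  : U -> Prop :=
  match excluded_middle_informative (exists Y, X = B' Y) with
  | left _ => X
  | right _ => fun _ => False
  end.

Definition box_trans (Var : Type) (M : nmodel Var) (Sigma : form Var -> Prop)
  (X : Wf Var M Sigma -> Prop) : Wf Var M Sigma -> Prop :=
  fun c => box_min Var M Sigma X c \/ closure_box (box_min Var M Sigma) X c.

(* Main.v *)
Require Import Defs.
From Stdlib Require Import Classical ClassicalEpsilon FunctionalExtensionality PropExtensionality.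

Lemma pred_ext {T : Type} (A B : T -> Prop) : (forall x, A x <-> B x) -> A = B.
Proof. intro H. apply functional_extensionality; intro x. apply propositional_extensionality; auto. Qed.

Section S.
Variables (Var : Type) (M : nmodel Var) (Sigma : form Var -> Prop).

Definition wc (w : world M) : Wf Var M Sigma := exist _ (cls Var M Sigma w) (ex_intro _ w eq_refl).

Lemma tilde_iff a w : Sigma a -> (truth Var M a w <-> tilde Var M Sigma (truth Var M a) (wc w)).
Proof.
  intro Ha; split.
  - intro H. exists w. split; auto.
  - intros [v [Hv E]]. simpl in E.
    assert (Hs : sim Var M Sigma w v).
    { change (cls Var M Sigma w v). rewrite E. unfold cls, sim. intros; tauto. }
    apply (Hs a Ha). exact Hv.
Qed.

Lemma tilde_eq a b : Sigma a -> Sigma b ->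
  tilde Var M Sigma (truth Var M a) = tilde Var M Sigma (truth Var M b) ->
  truth Var M a = truth Var M b.
Proof.
  intros Ha Hb E. apply pred_ext; intro w.
  rewrite (tilde_iff a w Ha), (tilde_iff b w Hb), E. tauto.
Qed.

Lemma tilde_sub (A B : world M -> Prop) : subset A B -> subset (tilde Var M Sigma A) (tilde Var M Sigma B).
Proof. intros H c [w [Hw E]]. exists w; split; auto. Qed.

Lemma box_min_spec X c : box_min Var M Sigma X c ->
  exists chi, Sigma (FBox chi) /\ X = tilde Var M Sigma (truth Var M chi) /\
     X = X /\ tilde Var M Sigma (truth Var M (FBox chi)) c.
Proof.
  unfold box_min. destruct excluded_middle_informative as [H|H]; [|contradiction].
  destruct (constructive_indefinite_description _ H) as [chi [H1 H2]]. simpl.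
  intro Hc. exists chi; auto.
Qed.

End S.

Theorem mainTheorem6 (Var : Type) (M : nmodel Var) (Sigma : form Var -> Prop) :
  inhabited (world M) ->
  transitive_model Var M ->
  subformula_closed Var Sigma ->
  is_filtration Var M Sigma (box_trans Var M Sigma).
Proof.
  intros _ Htr [C1 [C2 C3]] phi Hphi.
  assert (Hp : Sigma phi) by auto.
  assert (Hmin : box_min Var M Sigma (tilde Var M Sigma (truth Var M phi))
                 = tilde Var M Sigma (truth Var M (FBox phi))).
  { unfold box_min. destruct excluded_middle_informative as [H|H].
    - destruct (constructive_indefinite_description _ H) as [psi [H1 H2]]. simpl.
      pose proof (tilde_eq Var M Sigma phi psi Hp (C3 _ H1) H2) as E.
      simpl. rewrite E. reflexivity.
    - exfalso. apply H. exists phi; auto. }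
  unfold box_trans. rewrite Hmin.
  apply pred_ext; intro c; split; [intros [Hc|Hc]; auto| auto].
  unfold closure_box in Hc. destruct excluded_middle_informative as [[Y HY]|H]; [|contradiction].
  destruct (classic (exists d, box_min Var M Sigma Y d)) as [[d Hd]|Hn].
  - destruct (box_min_spec Var M Sigma Y d Hd) as [chi [Hchi [EY _]]].
    subst Y.
    assert (Hm : box_min Var M Sigma (tilde Var M Sigma (truth Var M chi))
                 = tilde Var M Sigma (truth Var M (FBox chi))).
    { unfold box_min. destruct excluded_middle_informative as [H|H].
      - destruct (constructive_indefinite_description _ H) as [psi [H1 H2]]. simpl.
        pose proof (tilde_eq Var M Sigma chi psi (C3 _ Hchi) (C3 _ H1) H2) as E.
        rewrite E. reflexivity.
      - exfalso. apply H. exists chi; auto. }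
    rewrite Hm in HY.
    pose proof (tilde_eq Var M Sigma phi (FBox chi) Hp Hchi HY) as E.
    assert (Hsub : subset (truth Var M phi) (truth Var M (FBox phi))).
    { simpl. rewrite E. simpl. apply Htr. }
    apply (tilde_sub Var M Sigma _ _ Hsub). exact Hc.
  - exfalso. rewrite HY in Hc. apply Hn. eauto.
Qed.
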